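(* Let $\mathcal{R}$ be a commutative ring with unity, $P$ a connected locally finite poset in which every maximal chain has at least three elements, and $b$ an additive biderivation of $I(P,\mathcal{R})$. Let $r_1,r_2\in\mathcal{R}$ and $x\le y$, $u\le v$ in $P$ be such that any two of $x,y,u,v$ are comparable, $x\neq v$ and $y\neq u$. Then $b(r_1e_{xy},r_2e_{uv})=0$, except possibly in the case where $x=y\neq u=v$ and one of $x,u$ is a maximal element of $P$ and the other is a minimal element of $P$.
   Context: $I(P,\mathcal{R})$ is the incidence algebra: functions $f:P\times P\to\mathcal{R}$ with $f(x,y)=0$ unless $x\le y$, with product $(fg)(x,y)=\sum_{x\le z\le y}f(x,z)g(z,y)$; $e_{xy}$ ($x\le y$) is the function equal to $1$ at $(x,y)$ and $0$ elsewhere. An additive biderivation is a map $b$ of two arguments, additive in each, with $b(\alpha\beta,\gamma)=\alpha b(\beta,\gamma)+b(\alpha,\gamma)\beta$ and $b(\alpha,\beta\gamma)=\beta b(\alpha,\gamma)+b(\alpha,\beta)\gamma$. $P$ is connected if any two elements are joined by a finite sequence of successively comparable elements. A maximal chain is a totally ordered subset to which no element of $P$ can be added keeping it totally ordered. *)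

(* Defs.v *)
From HB Require Import structures.
From mathcomp Require Import all_boot all_order all_algebra.
Set Implicit Arguments. Unset Strict Implicit. Unset Printing Implicit Defensive.
Import Order.TTheory GRing.Theory.

Section IncidenceDefs.
Variables (d : Order.disp_t) (P : porderType d) (R : comPzRingType).

Definition cmp (a b : P) : bool := ((a <= b)%O || (b <= a)%O).

(* locally finite, witnessed by duplicate-free enumerations of all intervals [x,y] *)
Definition interval_enum (itv : P -> P -> seq P) : Prop :=
  forall x y, uniq (itv x y) /\ forall z, (z \in itv x y) = ((x <= z)%O && (z <= y)%O).

Definition connected_poset : Prop :=
  forall x y : P, exists s : seq P, path cmp x s /\ last x s = y.

Definition is_chain (C : P -> Prop) : Prop :=
  forall a b, C a -> C b -> cmp a b.

Definition maximal_chain (C : P -> Prop) : Prop :=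
  is_chain C /\ forall z, is_chain (fun a => C a \/ a = z) -> C z.

Definition chains_ge3 : Prop :=
  forall C, maximal_chain C ->
    exists a b c, [/\ C a, C b, C c & [/\ a <> b, a <> c & b <> c]].

Definition maximal_elt (x : P) : Prop := forall z, (x <= z)%O -> z = x.
Definition minimal_elt (x : P) : Prop := forall z, (z <= x)%O -> z = x.

Definition in_incidence (f : P -> P -> R) : Prop :=
  forall x y, ~~ (x <= y)%O -> f x y = 0%R.

Definition inc_add (f g : P -> P -> R) : P -> P -> R := fun x y => (f x y + g x y)%R.

Definition inc_mul (itv : P -> P -> seq P) (f g : P -> P -> R) : P -> P -> R :=
  fun x y => (\sum_(z <- itv x y) f x z * g z y)%R.

Definition sc_e (r : R) (x y : P) : P -> P -> R :=
  fun p q => if (p == x) && (q == y) then r else 0%R.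

Definition is_biderivation (itv : P -> P -> seq P)
    (b : (P -> P -> R) -> (P -> P -> R) -> (P -> P -> R)) : Prop :=
  [/\ forall f g, in_incidence f -> in_incidence g -> in_incidence (b f g),
      forall f g h, in_incidence f -> in_incidence g -> in_incidence h ->
        forall p q, b (inc_add f g) h p q = (b f h p q + b g h p q)%R,
      forall f g h, in_incidence f -> in_incidence g -> in_incidence h ->
        forall p q, b f (inc_add g h) p q = (b f g p q + b f h p q)%R,
      forall f g h, in_incidence f -> in_incidence g -> in_incidence h ->
        forall p q, b (inc_mul itv f g) h p q =
          (inc_mul itv f (b g h) p q + inc_mul itv (b f h) g p q)%R &
      forall f g h, in_incidence f -> in_incidence g -> in_incidence h ->
        forall p q, b f (inc_mul itv g h) p q =
          (inc_mul itv g (b f h) p q + inc_mul itv (b f g) h p q)%R].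

End IncidenceDefs.

(* Main.v *)
Require Import Defs.
From mathcomp Require Import all_boot all_order all_algebra.
From Stdlib Require Import FunctionalExtensionality Classical.
From mathcomp Require Import ring.
Set Implicit Arguments. Unset Strict Implicit. Unset Printing Implicit Defensive.
Import Order.TTheory GRing.Theory.
Local Open Scope ring_scope.

Section S.
Variables (d : Order.disp_t) (P : porderType d) (R : comPzRingType).
Variable itv : P -> P -> seq P.
Hypothesis hitv : interval_enum itv.

Lemma feq (F G : P -> P -> R) : (forall s t, F s t = G s t) -> F = G.
Proof. move=> h; apply: functional_extensionality => s; apply: functional_extensionality => t; exact: h. Qed.

Lemma mem_itv p q z : (z \in itv p q) = ((p <= z)%O && (z <= q)%O).
Proof. by case: (hitv p q) => _ ->. Qed.

Lemma itv_sub_l p q z (F : P -> R) : z \in itv p q ->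
  \sum_(w <- itv z q) F w = \sum_(w <- itv p q | (z <= w)%O) F w.
Proof.
rewrite mem_itv => /andP[pz zq]; rewrite -[RHS]big_filter.
have pe : perm_eq (itv z q) [seq w <- itv p q | (z <= w)%O].
  apply: uniq_perm; first by case: (hitv z q).
    by rewrite filter_uniq //; case: (hitv p q).
  move=> w; rewrite mem_filter !mem_itv; apply/idP/idP.
    by case/andP=> zw ->; rewrite zw (le_trans pz zw).
  by case/and3P=> -> _ ->.
by rewrite (perm_big _ pe).
Qed.

Lemma itv_sub_r p q w (F : P -> R) : w \in itv p q ->
  \sum_(z <- itv p w) F z = \sum_(z <- itv p q | (z <= w)%O) F z.
Proof.
rewrite mem_itv => /andP[pw wq]; rewrite -[RHS]big_filter.
have pe : perm_eq (itv p w) [seq z <- itv p q | (z <= w)%O].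
  apply: uniq_perm; first by case: (hitv p w).
    by rewrite filter_uniq //; case: (hitv p q).
  move=> z; rewrite mem_filter !mem_itv; apply/idP/idP.
    by case/andP=> pz zw; rewrite zw pz (le_trans zw wq).
  by case/and3P=> -> -> _.
by rewrite (perm_big _ pe).
Qed.

Lemma mul_assoc (f g h : P -> P -> R) p q :
  inc_mul itv f (inc_mul itv g h) p q = inc_mul itv (inc_mul itv f g) h p q.
Proof.
rewrite /inc_mul.
transitivity (\sum_(z <- itv p q) \sum_(w <- itv p q)
   (if (z <= w)%O then f p z * (g z w * h w q) else 0)).
  apply: eq_big_seq => z zin.
  by rewrite big_distrr /= (itv_sub_l _ zin) big_mkcond.
rewrite exchange_big /=.
apply: eq_big_seq => w win.
rewrite big_distrl /= (itv_sub_r _ win) [RHS]big_mkcond /=.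
by apply: eq_bigr => z _; case: ifP => // _; rewrite mulrA.
Qed.

Lemma mul_inc (f g : P -> P -> R) : in_incidence (inc_mul itv f g).
Proof.
move=> p q npq; rewrite /inc_mul big_seq big1 // => z; rewrite mem_itv => /andP[pz zq].
by move: npq; rewrite (le_trans pz zq).
Qed.

Lemma mulDr (f F G : P -> P -> R) p q : inc_mul itv f (inc_add F G) p q = inc_mul itv f F p q + inc_mul itv f G p q.
Proof. by rewrite /inc_mul -big_split; apply: eq_bigr => z _; rewrite /inc_add mulrDr. Qed.
Lemma mulDl (f F G : P -> P -> R) p q : inc_mul itv (inc_add F G) f p q = inc_mul itv F f p q + inc_mul itv G f p q.
Proof. by rewrite /inc_mul -big_split; apply: eq_bigr => z _; rewrite /inc_add mulrDl. Qed.

Lemma sum_single (s : seq P) y (c : R) : uniq s ->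
  \sum_(z <- s) (if z == y then c else 0) = if y \in s then c else 0.
Proof.
move=> us; case: (boolP (y \in s)) => ys.
  rewrite (big_rem y ys) /= eqxx big1_seq ?addr0 // => z /andP[_ zin].
  case: eqP => // zy; move: zin; rewrite zy mem_rem_uniq // inE eqxx //.
rewrite big1_seq // => z /andP[_ zin]; case: eqP => // zy.
by move: ys; rewrite -zy zin.
Qed.

Lemma sc_e_inc (r : R) (x y : P) : (x <= y)%O -> in_incidence (sc_e r x y).
Proof.
move=> xy p q; rewrite /sc_e; case: andP => // [[/eqP-> /eqP->]].
by rewrite xy.
Qed.

Lemma mulE_l (r : R) (x y : P) (h : P -> P -> R) p q : (x <= y)%O -> in_incidence h ->
  inc_mul itv (sc_e r x y) h p q = if p == x then r * h y q else 0.
Proof.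
move=> xy hh; rewrite /inc_mul /sc_e; case: eqP => [->|ne]; last first.
  by rewrite big1 // => z _; rewrite mul0r.
rewrite (eq_bigr (fun z => if z == y then r * h y q else 0)); last first.
  by move=> z _ /=; case: eqP => [->|]; rewrite ?mul0r.
rewrite sum_single; last by case: (hitv x q).
rewrite mem_itv xy /=; case: ifP => // yq.
by rewrite hh ?yq // mulr0.
Qed.

Lemma mulE_r (r : R) (x y : P) (h : P -> P -> R) p q : (x <= y)%O -> in_incidence h ->
  inc_mul itv h (sc_e r x y) p q = if q == y then h p x * r else 0.
Proof.
move=> xy hh; rewrite /inc_mul /sc_e; case: eqP => [->|ne]; last first.
  by rewrite big1 // => z _; rewrite andbF mulr0.
rewrite (eq_bigr (fun z => if z == x then h p x * r else 0)); last first.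
  by move=> z _; rewrite ?andbT; case: eqP => [->|]; rewrite ?mulr0.
rewrite sum_single; last by case: (hitv p y).
rewrite mem_itv xy andbT; case: ifP => // px.
by rewrite hh ?px // mul0r.
Qed.

End S.

Section B.
Variables (d : Order.disp_t) (P : porderType d) (R : comPzRingType).
Variable itv : P -> P -> seq P.
Hypothesis hitv : interval_enum itv.
Variable b : (P -> P -> R) -> (P -> P -> R) -> (P -> P -> R).
Hypothesis hb : is_biderivation itv b.

Local Notation inc := (@in_incidence d P R).
Local Notation mul := (inc_mul itv).

Lemma cancel4 (a a' x y c1 c2 : R) :
  a + c1 + (c2 + x) = a' + c2 + (c1 + y) -> a + x = a' + y.
Proof.
move=> h; apply/eqP; rewrite -subr_eq0; apply/eqP.
transitivity ((a + c1 + (c2 + x)) - (a' + c2 + (c1 + y))); first ring.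
by rewrite h subrr.
Qed.

Lemma bresar (x y u v : P -> P -> R) p q : inc x -> inc y -> inc u -> inc v ->
  mul (mul x y) (b u v) p q + mul (b x y) (mul v u) p q =
  mul (mul y x) (b u v) p q + mul (b x y) (mul u v) p q.
Proof.
case: hb => hb1 hb2 hb3 hb4 hb5 ix iy iu iv.
have mi := @mul_inc d P R itv hitv.
have E1 := hb4 x u (mul y v) ix iu (mi _ _) p q.
have E2 := hb5 (mul x u) y v (mi _ _) iy iv p q.
have F1 : b u (mul y v) = inc_add (mul y (b u v)) (mul (b u y) v).
  by apply: feq => s t; rewrite hb5.
have F2 : b x (mul y v) = inc_add (mul y (b x v)) (mul (b x y) v).
  by apply: feq => s t; rewrite hb5.
have F3 : b (mul x u) v = inc_add (mul x (b u v)) (mul (b x v) u).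
  by apply: feq => s t; rewrite hb4.
have F4 : b (mul x u) y = inc_add (mul x (b u y)) (mul (b x y) u).
  by apply: feq => s t; rewrite hb4.
rewrite F1 F2 !mulDr !mulDl !(mul_assoc hitv) in E1.
rewrite F3 F4 !mulDr !mulDl !(mul_assoc hitv) in E2.
rewrite !(mul_assoc hitv); apply: (@cancel4 _ _ _ _
  (mul (mul x (b u y)) v p q) (mul (mul y (b x v)) u p q)).
by rewrite -E1 -E2.
Qed.

Lemma mul0l (F G : P -> P -> R) p q : (forall s t, F s t = 0) -> mul F G p q = 0.
Proof. by move=> h; rewrite /inc_mul big1 // => z _; rewrite h mul0r. Qed.
Lemma mul0r_ (F G : P -> P -> R) p q : (forall s t, G s t = 0) -> mul F G p q = 0.
Proof. by move=> h; rewrite /inc_mul big1 // => z _; rewrite h mulr0. Qed.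

Lemma prod_ee (r s : R) (a a' c c' : P) : (a <= a')%O -> (c <= c')%O ->
  mul (sc_e r a a') (sc_e s c c') =
  if a' == c then sc_e (r * s) a c' else (fun _ _ => 0).
Proof.
move=> aa cc; apply: feq => p q; rewrite (mulE_l hitv) //; last exact: sc_e_inc.
rewrite /sc_e; case E1: (p == a); case E2: (a' == c); case E3: (q == c');
  by rewrite /= ?E1 ?E2 ?E3 /= ?mulr0.
Qed.

Lemma prod_ee0 (r s : R) (a a' c c' : P) p q : (a <= a')%O -> (c <= c')%O -> a' != c ->
  mul (sc_e r a a') (sc_e s c c') p q = 0.
Proof. by move=> h1 h2 h3; rewrite prod_ee // (negbTE h3). Qed.

Lemma support (al be : P -> P -> R) : inc al -> inc be ->
  (forall p q, mul al be p q = 0) -> (forall p q, mul be al p q = 0) ->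
  (forall p a c, (a <= c)%O -> a != c -> b al be p a = 0) /\
  (forall a c q, (a <= c)%O -> a != c -> b al be c q = 0).
Proof.
move=> ia ib h1 h2; have hb1 := (let: And5 h _ _ _ _ := hb in h).
have ie : forall (r : R) (x y : P), (x <= y)%O -> inc (sc_e r x y).
  by move=> r x y; exact: sc_e_inc.
split.
  move=> p a c ac nac.
  have := bresar p c ia ib (ie 1 a a (lexx a)) (ie 1 a c ac).
  have Z : forall s t : P, mul (sc_e (1:R) a c) (sc_e (1:R) a a) s t = 0.
    by move=> s t; rewrite prod_ee ?lexx // eq_sym (negbTE nac).
  rewrite mul0l // (mul0r_ _ _ _ Z).
  rewrite prod_ee ?lexx // eqxx mulr1 (mulE_r hitv) //; last exact: hb1.
  rewrite eqxx mulr1 => /esym/eqP; rewrite !add0r => /eqP.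
  by rewrite (mul0l _ _ _ h2) add0r.
move=> a c q ac nac.
have := bresar a q (ie 1 a a (lexx a)) (ie 1 a c ac) ia ib.
rewrite (mul0r_ _ _ _ h2) (mul0r_ _ _ _ h1) !addr0.
rewrite prod_ee ?lexx // eqxx mulr1 (mulE_l hitv) //; last exact: hb1.
have Z : forall s t : P, mul (sc_e (1:R) a c) (sc_e (1:R) a a) s t = 0.
  by move=> s t; rewrite prod_ee ?lexx // eq_sym (negbTE nac).
by rewrite eqxx mul1r (mul0l _ _ _ Z).
Qed.

Lemma support_nz (al be : P -> P -> R) p q : inc al -> inc be ->
  (forall p q, mul al be p q = 0) -> (forall p q, mul be al p q = 0) ->
  b al be p q <> 0 -> minimal_elt p /\ maximal_elt q.
Proof.
move=> ia ib h1 h2 nz; have [S1 S2] := support ia ib h1 h2.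
split.
  move=> z zp; apply: NNPP => ne; apply: nz; apply: (S2 z p q zp).
  by apply/eqP.
move=> z qz; apply: NNPP => ne; apply: nz; apply: (S1 p q z qz).
by apply/eqP => e; apply: ne; rewrite e.
Qed.

Lemma between (hch : chains_ge3 P) (x y : P) : minimal_elt x -> maximal_elt y ->
  (x <= y)%O -> x != y -> exists z, [/\ (x <= z)%O, (z <= y)%O, z != x & z != y].
Proof.
move=> mx my xy nxy; apply: NNPP => H.
pose C := fun a : P => a = x \/ a = y.
have hC : maximal_chain C.
  split.
    by move=> a c [->|->] [->|->]; rewrite /cmp ?lexx ?xy ?orbT.
  move=> z zC.
  have cxz : cmp x z := zC x z (or_introl (or_introl erefl)) (or_intror erefl).
  have cyz : cmp y z := zC y z (or_introl (or_intror erefl)) (or_intror erefl).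
  case/orP: cxz => [xz|zx]; last by left; apply: mx.
  case/orP: cyz => [yz|zy]; first by right; apply: my.
  case: (eqVneq z x) => [->|zx']; first by left.
  case: (eqVneq z y) => [->|zy']; first by right.
  by exfalso; apply: H; exists z.
have [a1 [a2 [a3 [C1 C2 C3 [h12 h13 h23]]]]] := hch C hC.
move: h12 h13 h23; case: C1 => ->; case: C2 => ->; case: C3 => ->;
  by move=> g1 g2 g3; first [exact: g1 erefl | exact: g2 erefl | exact: g3 erefl].
Qed.

Lemma main_sec (hch : chains_ge3 P) (r1 r2 : R) (x y u v : P)
  (hxy : (x <= y)%O) (huv : (u <= v)%O)
  (hxv' : x <> v) (hyu' : y <> u) :
  ~ (x = y /\ u = v /\ x <> u /\
     ((maximal_elt x /\ minimal_elt u) \/ (minimal_elt x /\ maximal_elt u))) ->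
  forall p q, b (sc_e r1 x y) (sc_e r2 u v) p q = 0.
Proof.
move=> nex p q.
have [hb1 hb2 hb3 hb4 hb5] := hb.
have ie : forall (r : R) (a c : P), (a <= c)%O -> inc (sc_e r a c).
  by move=> r a c; exact: sc_e_inc.
have i1 : forall a : P, inc (sc_e 1 a a) by move=> a; exact: ie _ _ _ (lexx a).
have xv : x != v by apply/eqP.
have vx : v != x by rewrite eq_sym.
have yu : y != u by apply/eqP.
have uy : u != y by rewrite eq_sym.
set f := sc_e r1 x y; set g := sc_e r2 u v.
have iF : inc f := ie _ _ _ hxy.
have iG : inc g := ie _ _ _ huv.
have Efl : f = mul (sc_e 1 x x) f by rewrite /f prod_ee ?lexx // eqxx mul1r.
have Efr : f = mul f (sc_e 1 y y) by rewrite /f prod_ee ?lexx // eqxx mulr1.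
have Egl : g = mul (sc_e 1 u u) g by rewrite /g prod_ee ?lexx // eqxx mul1r.
have Egr : g = mul g (sc_e 1 v v) by rewrite /g prod_ee ?lexx // eqxx mulr1.
set M := b (sc_e 1 x x) (sc_e 1 v v).
set N := b (sc_e 1 y y) (sc_e 1 u u).
have iD := hb1 _ _ iF iG.
have iM : inc M := hb1 _ _ (i1 x) (i1 v).
have iN : inc N := hb1 _ _ (i1 y) (i1 u).
have i2 := hb1 _ _ (i1 x) iG.
have i3 := hb1 _ _ iF (i1 v).
have i4 := hb1 _ _ (i1 y) iG.
have i5 := hb1 _ _ iF (i1 u).
have LA : forall p q, p != x ->
    b f g p q = if (p == u) && (q == y) then r2 * M v x * r1 else 0.
  move=> s t sx.
  have := hb4 (sc_e 1 x x) f g (i1 x) iF iG s t; rewrite -Efl => ->.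
  rewrite (mulE_l hitv) ?lexx // (negbTE sx) add0r (mulE_r hitv) //.
  have := hb5 (sc_e 1 x x) g (sc_e 1 v v) (i1 x) iG (i1 v) s x; rewrite -Egr => ->.
  rewrite (mulE_l hitv) // ?(mulE_r hitv) ?lexx //.
  rewrite (negbTE xv) addr0.
  by case: (s == u); case: (t == y); rewrite /= ?mul0r.
have LD : forall p q, q != v ->
    b f g p q = if (p == u) && (q == y) then r2 * M v x * r1 else 0.
  move=> s t tv.
  have := hb5 f g (sc_e 1 v v) iF iG (i1 v) s t; rewrite -Egr => ->.
  rewrite (mulE_r hitv) ?lexx // ?(negbTE tv) ?addr0 (mulE_l hitv) //.
  have := hb4 (sc_e 1 x x) f (sc_e 1 v v) (i1 x) iF (i1 v) v t; rewrite -Efl => ->.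
  rewrite (mulE_l hitv) ?lexx // ?(mulE_r hitv) //.
  rewrite (negbTE vx) add0r.
  by case: (s == u); case: (t == y); rewrite /= ?mulr0 ?mulrA.
have LB : forall p q, q != y ->
    b f g p q = if (p == x) && (q == v) then r1 * N y u * r2 else 0.
  move=> s t ty.
  have := hb4 f (sc_e 1 y y) g iF (i1 y) iG s t; rewrite -Efr => ->.
  rewrite (mulE_r hitv) ?lexx // ?(negbTE ty) ?addr0 (mulE_l hitv) //.
  have := hb5 (sc_e 1 y y) (sc_e 1 u u) g (i1 y) (i1 u) iG y t; rewrite -Egl => ->.
  rewrite (mulE_l hitv) ?lexx // ?(mulE_r hitv) //.
  rewrite (negbTE yu) add0r.
  by case: (s == x); case: (t == v); rewrite /= ?mulr0 ?mulrA.
have LC : forall p q, p != u ->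
    b f g p q = if (p == x) && (q == v) then r1 * N y u * r2 else 0.
  move=> s t su.
  have := hb5 f (sc_e 1 u u) g iF (i1 u) iG s t; rewrite -Egl => ->.
  rewrite (mulE_l hitv) ?lexx // (negbTE su) add0r (mulE_r hitv) //.
  have := hb4 f (sc_e 1 y y) (sc_e 1 u u) iF (i1 y) (i1 u) s u; rewrite -Efr => ->.
  rewrite (mulE_l hitv) // ?(mulE_r hitv) ?lexx //.
  rewrite (negbTE uy) addr0.
  by case: (s == x); case: (t == v); rewrite /= ?mul0r.
have Z0 : forall (c : R), (if (p == u) && (q == y) then c * 0 * r1 else 0) = 0.
  by move=> c; rewrite mulr0 mul0r if_same.
have Z1 : forall (c : R), (if (p == x) && (q == v) then c * 0 * r2 else 0) = 0.
  by move=> c; rewrite mulr0 mul0r if_same.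
have exx : forall a c : P, a != c -> forall s t : P,
    mul (sc_e (1:R) a a) (sc_e (1:R) c c) s t = 0.
  by move=> a c ac s t; rewrite prod_ee ?lexx // (negbTE ac).
case: (boolP (v <= x)%O) => [hvx | hvx].
  have nyu : ~~ (y <= u)%O.
    apply/negP => yu'; apply: hxv'; apply/le_anti.
    by rewrite hvx (le_trans hxy (le_trans yu' huv)).
  have Nyu : N y u = 0 by apply: iN.
  have ux : u != x.
    apply/eqP => e; apply: hxv'; apply/le_anti; rewrite hvx -e huv //.
  case: (eqVneq q y) => [qy|qy]; last by rewrite LB // Nyu Z1.
  case: (eqVneq p u) => [pu|pu]; last by rewrite LC // Nyu Z1.
  rewrite LA; last by rewrite pu.
  rewrite pu qy !eqxx /=.
  case: (classic (M v x = 0)) => [->|nz]; first by rewrite mulr0 mul0r.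
  have [mv mx] := support_nz (i1 x) (i1 v) (exx _ _ xv) (exx _ _ vx) nz.
  exfalso; apply: nex.
  have e1 := mv u huv; have e2 := mx y hxy.
  split; first by rewrite e2.
  split; first exact: e1.
  split; first by apply/eqP; rewrite eq_sym.
  by left; split=> //; rewrite e1.
have Mvx : M v x = 0 by apply: iM.
case: (boolP (y <= u)%O) => [hyu | hyu].
  have vy : v != y.
    apply/eqP => e; apply: hyu'; apply/le_anti; rewrite hyu -e huv //.
  case: (eqVneq p x) => [px|px]; last by rewrite LA // Mvx Z0.
  case: (eqVneq q v) => [qv|qv]; last by rewrite LD // Mvx Z0.
  rewrite LB; last by rewrite qv.
  rewrite px qv !eqxx /=.
  case: (classic (N y u = 0)) => [->|nz]; first by rewrite mulr0 mul0r.
  have [my mu] := support_nz (i1 y) (i1 u) (exx _ _ yu) (exx _ _ uy) nz.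
  exfalso; apply: nex.
  have e1 := my x hxy; have e2 := mu v huv.
  split; first by rewrite e1.
  split; first by rewrite e2.
  split; first by rewrite e1.
  by right; rewrite e1.
have Nyu : N y u = 0 by apply: iN.
case: (eqVneq p x) => [px|px]; last by rewrite LA // Mvx Z0.
case: (eqVneq q v) => [qv|qv]; last by rewrite LD // Mvx Z0.
case: (eqVneq q y) => [qy|qy]; last by rewrite LB // Nyu Z1.
case: (eqVneq p u) => [pu|pu]; last by rewrite LC // Nyu Z1.
have ux : u = x by rewrite -pu.
have vy : v = y by rewrite -qv.
rewrite px qy.
case: (classic (b f g x y = 0)) => // nz.
have fg0 : forall s t, mul f g s t = 0.
  by move=> s t; rewrite /f /g prod_ee // (negbTE yu).
have gf0 : forall s t, mul g f s t = 0.
  by move=> s t; rewrite /f /g prod_ee // (negbTE vx).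
have [mnx mxy] := support_nz iF iG fg0 gf0 nz.
have xy' : x != y by rewrite -vy.
have [z [xz zy zx' zy']] := between hch mnx mxy hxy xy'.
have yx : y != x by rewrite eq_sym.
have yz : y != z by rewrite eq_sym.
have Ef3 : f = mul (sc_e r1 x z) (sc_e 1 z y) by rewrite /f prod_ee // eqxx mulr1.
have i6 := hb1 _ _ (ie 1 _ _ zy) iG.
have i7 := hb1 _ _ (ie r1 _ _ xz) iG.
have := hb4 (sc_e r1 x z) (sc_e 1 z y) g (ie _ _ _ xz) (ie _ _ _ zy) iG x y.
rewrite -Ef3 => ->.
rewrite (mulE_l hitv) // (mulE_r hitv) // !eqxx.
have c1 : forall s t, mul (sc_e 1 z y) g s t = 0.
  by move=> s t; rewrite /g prod_ee // ux (negbTE yx).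
have c2 : forall s t, mul g (sc_e 1 z y) s t = 0.
  by move=> s t; rewrite /g prod_ee // vy (negbTE yz).
have c3 : forall s t, mul (sc_e r1 x z) g s t = 0.
  by move=> s t; rewrite /g prod_ee // ux (negbTE zx').
have c4 : forall s t, mul g (sc_e r1 x z) s t = 0.
  by move=> s t; rewrite /g prod_ee // vy (negbTE yx).
have [_ S2] := support (ie 1 _ _ zy) iG c1 c2.
have [S1 _] := support (ie r1 _ _ xz) iG c3 c4.
by rewrite (S2 x z y xz) ?(S1 x z y zy) // ?mulr0 ?mul0r ?addr0 // eq_sym.
Qed.

End B.

Theorem mainTheorem12 (d : Order.disp_t) (P : porderType d) (R : comPzRingType)
  (itv : P -> P -> seq P) (hitv : interval_enum itv)
  (hconn : connected_poset P) (hch : chains_ge3 P)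
  (b : (P -> P -> R) -> (P -> P -> R) -> (P -> P -> R))
  (hb : is_biderivation itv b)
  (r1 r2 : R) (x y u v : P)
  (hxy : (x <= y)%O) (huv : (u <= v)%O)
  (hxu : cmp x u) (hxv : cmp x v) (hyu : cmp y u) (hyv : cmp y v)
  (hxv' : x <> v) (hyu' : y <> u) :
  ~ (x = y /\ u = v /\ x <> u /\
     ((maximal_elt x /\ minimal_elt u) \/ (minimal_elt x /\ maximal_elt u))) ->
  forall p q, b (sc_e r1 x y) (sc_e r2 u v) p q = 0%R.
Proof. exact: (main_sec hitv hb hch r1 r2 hxy huv hxv' hyu'). Qed.
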